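(* Let $N\ge 3$, $\Omega=\{x\in\mathbb{R}^N : 1<|x|<3\}$, $\Psi_\alpha(x)=\big||x|-2\big|^\alpha$ for $\alpha>0$, and for $p>2$, $u\in H^1_0(\Omega)\setminus\{0\}$, $$R_{\alpha,p}(u)=\frac{\int_\Omega|\nabla u|^2\,dx}{\left(\int_\Omega \Psi_\alpha |u|^p\,dx\right)^{2/p}},\qquad S_{\alpha,p}=\inf_{u\in H^1_{0}(\Omega)\setminus\{0\}} R_{\alpha,p}(u).$$ Let $p\in(2,2^* )$, where $2^*=2N/(N-2)$. Then there exist $\bar\alpha>0$ and a constant $C>0$ (independent of $\alpha$) such that for all $\alpha\ge\bar\alpha$ $$S_{\alpha,p}\le C\,\alpha^{2-N+\frac{2N}{p}}.$$ *)

(* Defs.v *)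
From HB Require Import structures.
From mathcomp Require Import all_boot all_order all_algebra.
From mathcomp Require Import all_classical all_reals all_analysis.
Set Implicit Arguments. Unset Strict Implicit. Unset Printing Implicit Defensive.
Import Order.TTheory GRing.Theory Num.Theory.
Import numFieldNormedType.Exports.
Local Open Scope classical_set_scope.
Local Open Scope ring_scope.

Section Defs.
Context {R : realType}.

(* Euclidean squared norm and Euclidean norm on R^N = 'rV[R]_N
   (mathcomp's own norm on matrices is the max norm, so we define it). *)
Definition sqnorm {N : nat} (x : 'rV[R]_N) : R := \sum_(i < N) x 0 i ^+ 2.
Definition enorm {N : nat} (x : 'rV[R]_N) : R := Num.sqrt (sqnorm x).

Definition annulus (N : nat) : set 'rV[R]_N := [set x | 1 < enorm x < 3].

Definition Psi {N : nat} (alpha : R) (x : 'rV[R]_N) : R := `| enorm x - 2 | `^ alpha.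

(* Lebesgue integral over R^n of a nonnegative extended-real function,
   computed as an iterated one-dimensional Lebesgue integral
   (equal to the integral w.r.t. n-dimensional Lebesgue measure for
   nonnegative Borel functions, by Tonelli). *)
Fixpoint iint (n : nat) : ('rV[R]_n -> \bar R) -> \bar R :=
  match n return ('rV[R]_n -> \bar R) -> \bar R with
  | 0 => fun f => f 0
  | n'.+1 => fun f =>
      (\int[@lebesgue_measure R]_(t in [set: R])
          iint (fun y : 'rV[R]_n' => f (row_mx (const_mx t : 'rV[R]_1) y)))%E
  end.

Definition grad {N : nat} (f : 'rV[R]_N -> R) (x : 'rV[R]_N) : 'rV[R]_N :=
  \row_(i < N) derive f x (delta_mx 0 i : 'rV[R]_N).

Fixpoint iterD {N : nat} (ds : seq 'rV[R]_N) (f : 'rV[R]_N -> R) : 'rV[R]_N -> R :=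
  match ds with
  | [::] => f
  | d :: ds' => fun x => derive (iterD ds' f) x d
  end.

Definition smooth {N : nat} (f : 'rV[R]_N -> R) : Prop :=
  forall (ds : seq 'rV[R]_N) (x : 'rV[R]_N), differentiable (iterD ds f) x.

Definition test_fun {N : nat} (Om : set 'rV[R]_N) (f : 'rV[R]_N -> R) : Prop :=
  smooth f /\ compact (closure [set x | f x != 0]) /\
  closure [set x | f x != 0] `<=` Om.

(* Borel measurability of functions on R^N (via the product sigma-algebra
   on N-tuples of reals) *)
Definition rV_of_tuple {N : nat} (t : N.-tuple R) : 'rV[R]_N := \row_(i < N) tnth t i.
Definition borel_fun {N : nat} (u : 'rV[R]_N -> R) : Prop :=
  measurable_fun [set: N.-tuple R] (u \o rV_of_tuple).

(* (u, G) is an element of H^1_0(Om) with weak gradient G: u and G are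
   limits in L^2 of phi_n and grad phi_n for a sequence of test functions
   (H^1_0 = closure of C_c^infinity(Om) in H^1). *)
Definition H10 {N : nat} (Om : set 'rV[R]_N) (u : 'rV[R]_N -> R)
    (G : 'rV[R]_N -> 'rV[R]_N) : Prop :=
  borel_fun u /\ (forall i : 'I_N, borel_fun (fun x => G x 0 i)) /\
  exists phi : nat -> 'rV[R]_N -> R,
    (forall n, test_fun Om (phi n)) /\
    ((fun n => iint (fun x => ((phi n x - u x) ^+ 2)%:E)) @ \oo --> 0%E) /\
    ((fun n => iint (fun x => (sqnorm (grad (phi n) x - G x))%:E)) @ \oo --> 0%E).

Definition Rayleigh {N : nat} (alpha p : R) (u : 'rV[R]_N -> R)
    (G : 'rV[R]_N -> 'rV[R]_N) : \bar R :=
  (iint (fun x => (sqnorm (G x))%:E) /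
   (iint (fun x => (Psi alpha x * `|u x| `^ p)%:E)) `^ (2 / p))%E.

Definition S_ap (N : nat) (alpha p : R) : \bar R :=
  ereal_inf [set r | exists (u : 'rV[R]_N -> R) (G : 'rV[R]_N -> 'rV[R]_N),
     [/\ H10 (@annulus N) u G,
         iint (fun x => (u x ^+ 2 + sqnorm (G x))%:E) != 0%E &
         r = Rayleigh alpha p u G]].

End Defs.

(* Main.v *)
Require Import Defs.
From HB Require Import structures.
From mathcomp Require Import all_boot all_order all_algebra.
From mathcomp Require Import all_classical all_reals all_analysis.
From mathcomp Require Import ring lra.
Require Import Defs.
Import Order.TTheory GRing.Theory Num.Theory.
Import numFieldNormedType.Exports.
Local Open Scope classical_set_scope.
Local Open Scope ring_scope.


Section Efun.
Context {R : realType}.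

Definition E (k : nat) (s : R) : R :=
  if 0 < s then expR (- s^-1) * s^-1 ^+ k else 0.

Lemma E_ge0 k s : 0 <= E k s.
Proof.
rewrite /E; case: ifPn => // s0.
by rewrite mulr_ge0 ?expR_ge0 // exprn_ge0 // invr_ge0 ltW.
Qed.

Lemma E_bound k s : E k s <= (k.+2)`!%:R * s ^+ 2.
Proof.
rewrite /E; case: ifPn => s0; last by rewrite mulr_ge0 ?sqr_ge0.
set t := s^-1.
have t0 : 0 < t by rewrite invr_gt0.
have h := expR_ge1Dxn k.+1 (ltW t0).
have h2 : t ^+ k.+2 <= (k.+2)`!%:R * expR t.
  rewrite -ler_pdivrMl ?ltr0n ?fact_gt0 //.
  rewrite mulrC; apply: le_trans h; rewrite lerDr //.
have -> : s = t^-1 by rewrite invrK.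
have et : 0 < expR t by rewrite expR_gt0.
have -> : expR (- t) * t ^+ k = (t ^+ k.+2 / expR t) * (t^-1) ^+ 2.
  rewrite expRN !exprSr; field.
  by rewrite gt_eqF //= gt_eqF.
rewrite ler_wpM2r ?sqr_ge0 // ler_pdivrMr //.
Qed.

Lemma E_gt0 k s : 0 < s -> E k s = expR (- s^-1) * s^-1 ^+ k.
Proof. by rewrite /E => ->. Qed.

Lemma E_le0 k s : s <= 0 -> E k s = 0.
Proof. by rewrite /E ltNge => ->. Qed.


Lemma E_deriv_pos (k : nat) (s : R) : 0 < s -> is_derive s (1:R) (E k) (E k.+2 s - k%:R * E k.+1 s).
Proof.
move=> s0.
have sn0 : s != 0 by rewrite gt_eqF.
have h1 : is_derive s (1:R) (fun y : R => - y^-1) (s ^- 2).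
  have := @is_deriveV R id s 1 1 sn0 (is_derive_id _ _).
  move/is_deriveN; rewrite opprfctE => h; apply: (is_derive_eq h).
  by rewrite scaler1 opprK.
have h2 : is_derive s (1:R) (expR \o (fun y : R => - y^-1)) (expR (- s^-1) * s ^- 2).
  exact: (@is_derive1_comp R expR (fun y : R => - y^-1) s _ _ (is_derive_expR _) h1).
have h3 := @is_deriveX R R^o (fun y : R => y^-1) k s 1 _ (@is_deriveV R id s 1 1 sn0 (is_derive_id _ _)).
have h4 := is_deriveM h2 h3.
rewrite exprfctE in h4.
apply: (near_eq_is_derive (f := (expR \o (fun y : R => - y^-1)) * (fun y : R => y^-1 ^+ k))).
  near=> y; rewrite /E ifT; last by near: y; exact: lt_nbhsr.
  by rewrite mulrfctE.
apply: (is_derive_eq h4); rewrite /E !ifT //=.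
idtac.
rewrite /GRing.scale /=.
case: k {h3 h4} => [|k].
  by rewrite !mul0r mulr0 add0r subr0 expr0 mul1r exprVn.
rewrite -[k.+1.-1]/k !exprSr exprVn; field.
Unshelve. all: try by end_near.
by rewrite sn0 expf_neq0.
Qed.

Lemma E_deriv_neg (k : nat) (s : R) : s < 0 -> is_derive s (1:R) (E k) (E k.+2 s - k%:R * E k.+1 s).
Proof.
move=> s0; rewrite !E_le0 ?ltW // mulr0 subr0.
apply: (near_eq_is_derive (f := cst (0:R))).
near=> y; rewrite /= E_le0 // ltW //; near: y; exact: lt_nbhsl.
Unshelve. all: by end_near.
Qed.

Lemma E_deriv0 (k : nat) : is_derive (0:R) (1:R) (E k) 0.
Proof.
have hc : (fun h : R => h^-1 *: (E k (h *: 1 + 0) - E k 0)) @ 0^' --> (0:R).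
  apply/cvgr0Pnorm_le => eps eps0.
  have c0 : 0 < (k.+2)`!%:R :> R by rewrite ltr0n fact_gt0.
  near=> h.
  have hn0 : h != 0 by near: h; exact: nbhs_dnbhs_neq.
  rewrite (E_le0 k 0 (lexx _)) subr0 scaler1 addr0 /GRing.scale /= normrM (ger0_norm (E_ge0 k h)).
  rewrite normfV ler_pdivrMl ?normr_gt0 //.
  apply: (le_trans (E_bound k h)).
  rewrite -(real_normK (num_real h)) expr2 mulrA [X in X <= _]mulrC ler_wpM2l //.
  rewrite mulrC -ler_pdivlMr //; apply: ltW; near: h; apply: dnbhs0_lt.
  by rewrite divr_gt0.
apply: DeriveDef; first by apply/cvg_ex; exists 0.
exact: cvg_lim hc.
Unshelve. all: by end_near.
Qed.

Lemma E_deriv (k : nat) (s : R) : is_derive s (1:R) (E k) (E k.+2 s - k%:R * E k.+1 s).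
Proof.
have [s0|s0|->] := ltgtP s 0.
- exact: E_deriv_neg.
- exact: E_deriv_pos.
- by rewrite !E_le0 // mulr0 subr0; exact: E_deriv0.
Qed.

Lemma E_derivable (k : nat) (s : R) : derivable (E k) s 1.
Proof. by case: (E_deriv k s). Qed.

Lemma E_derive1 (k : nat) (s : R) : derive1 (E k) s = E k.+2 s - k%:R * E k.+1 s.
Proof. by rewrite derive1E; case: (E_deriv k s). Qed.

Lemma E_diff (k : nat) (s : R) : differentiable (E k) s.
Proof. exact/derivable1_diffP/E_derivable. Qed.

Lemma E_cont (k : nat) : continuous (E k).
Proof. by move=> s; apply: differentiable_continuous; exact: E_diff. Qed.
End Efun.

Section Cclass.
Context {R : realType} {N : nat}.

Inductive Cf : ('rV[R]_N -> R) -> Prop :=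
| Cf_cst (c : R) : Cf (fun _ => c)
| Cf_coord (i : 'I_N) : Cf (fun x => x 0 i)
| Cf_add f g : Cf f -> Cf g -> Cf (fun x => f x + g x)
| Cf_mul f g : Cf f -> Cf g -> Cf (fun x => f x * g x)
| Cf_E (k : nat) f : Cf f -> Cf (fun x => E k (f x)).

Lemma Cf_diff f : Cf f -> forall x, differentiable f x.
Proof.
elim => {f}.
- move=> c x; exact: differentiable_cst.
- move=> i x; exact: differentiable_coord.
- move=> f g _ df _ dg x; have := differentiableD (df x) (dg x); by rewrite addrfctE.
- move=> f g _ df _ dg x; have := differentiableM (df x) (dg x); by rewrite mulrfctE.
- move=> k f _ df x; apply: (differentiable_comp (df x)); exact: E_diff.
Qed.

Lemma derive_coord (i : 'I_N) (x d : 'rV[R]_N) : 'D_d (fun y : 'rV[R]_N => y 0 i) x = d 0 i.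
Proof.
have := @derive_mx R _ 1 N id x d (@derivable_id _ _ x d).
rewrite derive_id => /matrixP /(_ 0 i); rewrite mxE => ->.
by [].
Qed.

Lemma derive_comp1 (f : 'rV[R]_N -> R) (g : R -> R) x d :
  differentiable f x -> derivable g (f x) 1 ->
  'D_d (fun y => g (f y)) x = derive1 g (f x) * 'D_d f x.
Proof.
move=> df dg.
have dgf : differentiable (g \o f) x.
  by apply: differentiable_comp => //; exact/derivable1_diffP.
rewrite (deriveE d dgf) diff_comp //; last exact/derivable1_diffP.
rewrite /= deriv1E // (deriveE d df) /= mulrC.
by [].
Qed.

Lemma Cf_der f : Cf f -> forall d, Cf (fun x => 'D_d f x).
Proof.
elim => {f}.
- move=> c d; have -> : (fun x => 'D_d (fun _ : 'rV[R]_N => c) x) = (fun _ => 0).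
    by apply: funext => x; exact: (derive_cst c x d).
  exact: Cf_cst.
- move=> i d; have -> : (fun x => 'D_d (fun y : 'rV[R]_N => y 0 i) x) = (fun _ => d 0 i).
    by apply: funext => x; exact: derive_coord.
  exact: Cf_cst.
- move=> f g cf hf cg hg d.
  have -> : (fun x => 'D_d (fun y => f y + g y) x) = (fun x => 'D_d f x + 'D_d g x).
    apply: funext => x; rewrite -deriveD //; apply: diff_derivable; exact: Cf_diff.
  exact: Cf_add.
- move=> f g cf hf cg hg d.
  have -> : (fun x => 'D_d (fun y => f y * g y) x) =
      (fun x => f x * 'D_d g x + g x * 'D_d f x).
    apply: funext => x; rewrite -[RHS]deriveM //; apply: diff_derivable; exact: Cf_diff.
  by apply: Cf_add; apply: Cf_mul.
- move=> k f cf hf d.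
  have -> : (fun x => 'D_d (fun y => E k (f y)) x) =
      (fun x => (E k.+2 (f x) + (- k%:R) * E k.+1 (f x)) * 'D_d f x).
    apply: funext => x; rewrite derive_comp1 ?E_derive1 ?mulNr //.
      exact: Cf_diff.
    exact: E_derivable.
  apply: Cf_mul => //; apply: Cf_add; first exact: Cf_E.
  by apply: Cf_mul; [exact: Cf_cst| exact: Cf_E].
Qed.

Lemma Cf_iterD f ds : Cf f -> Cf (iterD ds f).
Proof.
move=> cf; elim: ds => [|d ds IH] //=.
exact: Cf_der.
Qed.

Lemma Cf_smooth f : Cf f -> smooth f.
Proof. by move=> cf ds x; apply: Cf_diff; exact: Cf_iterD. Qed.

Lemma Cf_sum n (F : 'I_n -> 'rV[R]_N -> R) :
  (forall i, Cf (F i)) -> Cf (fun x => \sum_(i < n) F i x).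
Proof.
elim: n F => [|n IH] F cF.
  have -> : (fun x => \sum_(i < 0) F i x) = (fun _ => 0).
    by apply: funext => x; rewrite big_ord0.
  exact: Cf_cst.
have -> : (fun x => \sum_(i < n.+1) F i x) =
    (fun x => (\sum_(i < n) F (widen_ord (leqnSn n) i) x) + F ord_max x).
  by apply: funext => x; rewrite big_ord_recr.
apply: Cf_add => //; exact: IH.
Qed.

End Cclass.

Section Iint.
Context {R : realType}.
Local Notation mu := (@lebesgue_measure R).

Lemma le_intT (f g : R -> \bar R) : (forall t, (0 <= f t)%E) -> (forall t, (f t <= g t)%E) ->
  (\int[mu]_(t in [set: R]) f t <= \int[mu]_(t in [set: R]) g t)%E.
Proof.
move=> f0 fg.
have g0 : forall t, (0 <= g t)%E by move=> t; exact: le_trans (f0 t) (fg t).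
rewrite !ge0_integralTE //.
apply: le_ereal_sup => _ [h hf <-]; exists h => //= x.
exact: le_trans (hf x) (fg x).
Qed.

Lemma iint_ge0 n (f : 'rV[R]_n -> \bar R) : (forall x, (0 <= f x)%E) -> (0 <= iint f)%E.
Proof.
elim: n f => [|n IH] f f0 /=; first exact: f0.
apply: integral_ge0 => t _; apply: IH => y; exact: f0.
Qed.

Lemma iint_le n (f g : 'rV[R]_n -> \bar R) : (forall x, (0 <= f x)%E) ->
  (forall x, (f x <= g x)%E) -> (iint f <= iint g)%E.
Proof.
elim: n f g => [|n IH] f g f0 fg /=; first exact: fg.
apply: le_intT.
  by move=> t; apply: iint_ge0 => y; exact: f0.
by move=> t; apply: IH => y; [exact: f0| exact: fg].
Qed.

Lemma iint0 n (f : 'rV[R]_n -> \bar R) : (forall x, f x = 0%E) -> iint f = 0%E.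
Proof.
elim: n f => [|n IH] f f0 /=; first exact: f0.
by apply: integral0_eq => t _; apply: IH => y; exact: f0.
Qed.

Definition ind (a b t : R) : R := \1_([set` `[a, b]%R]) t.

Lemma ind_ge0 a b t : 0 <= ind a b t.
Proof. by rewrite /ind indicE; case: (_ \in _). Qed.

Lemma int_ind (c a b : R) : 0 <= c -> a <= b ->
  (\int[mu]_(t in [set: R]) (c * ind a b t)%:E = (c * (b - a))%:E)%E.
Proof.
move=> c0 ab.
rewrite /ind (@integralZl_indic _ _ _ mu setT measurableT (fun _ => [set` `[a, b]%R]) c) //; last first.
  by move=> c0'; exfalso; move: c0; rewrite leNgt c0'.
rewrite integral_indic // setIT.
have := @lebesgue_measure_itv R `[a, b]; rewrite /= => ->.
case: ltP => ab'; first by rewrite -EFinD -EFinM.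
have -> : b = a by apply/eqP; rewrite eq_le ab -lee_fin ab'.
by rewrite subrr mulr0 mule0.
Qed.

Lemma iint_box n (k : R) (a b : 'I_n -> R) : 0 <= k -> (forall i, a i <= b i) ->
  iint (fun x : 'rV[R]_n => (k * \prod_(i < n) ind (a i) (b i) (x 0 i))%:E) =
  (k * \prod_(i < n) (b i - a i))%:E.
Proof.
elim: n k a b => [|n IH] k a b k0 ab /=; first by rewrite !big_ord0.
have e1 : forall t (y : 'rV[R]_n),
    (row_mx (const_mx t : 'rV[R]_1) y) 0 ord0 = t.
  move=> t y; have -> : (ord0 : 'I_(1 + n)) = lshift n (ord0 : 'I_1) by apply: val_inj.
  by rewrite row_mxEl mxE.
have e2 : forall t (y : 'rV[R]_n) (i : 'I_n),
    (row_mx (const_mx t : 'rV[R]_1) y) 0 (lift ord0 i) = y 0 i.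
  move=> t y i; have -> : (lift ord0 i : 'I_(1 + n)) = rshift 1 i by apply: val_inj.
  by rewrite row_mxEr.
under eq_integral => t _.
  rewrite (_ : (fun y : 'rV[R]_n => _) = fun y => ((k * ind (a ord0) (b ord0) t) *
     \prod_(i < n) ind (a (lift ord0 i)) (b (lift ord0 i)) (y 0 i))%:E); last first.
    apply: funext => y; rewrite big_ord_recl e1 mulrA; congr (_ * _)%:E.
    by apply: eq_bigr => i _; rewrite e2.
  rewrite (IH (k * ind (a ord0) (b ord0) t)); last 2 first.
  - by rewrite mulr_ge0 // ind_ge0.
  - by move=> i; exact: ab.
  over.
simpl.
under eq_integral => t _ do rewrite mulrAC.
rewrite int_ind //; last by rewrite mulr_ge0 // prodr_ge0 // => i _; rewrite subr_ge0.
by rewrite big_ord_recl mulrAC mulrA.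
Qed.

End Iint.

Section Der.
Context {R : realType} {N : nat}.
Implicit Types (f g : 'rV[R]_N -> R) (x d : 'rV[R]_N).

Lemma Cf_borel f : Cf f -> borel_fun f.
Proof.
rewrite /borel_fun; elim => {f}.
- by move=> c; exact: measurable_cst.
- move=> i; have -> : (fun x : 'rV[R]_N => x 0 i) \o @rV_of_tuple R N = (@tnth N R ^~ i).
    by apply: funext => t; rewrite /rV_of_tuple /= mxE.
  exact: measurable_tnth.
- by move=> f g _ mf _ mg; exact: measurable_realfun.measurable_funD.
- by move=> f g _ mf _ mg; exact: measurable_realfun.measurable_funM.
- move=> k f _ mf; apply: measurableT_comp => //.
  exact: measurable_realfun.continuous_measurable_fun (E_cont k).
Qed.

Lemma der_add f g x d : differentiable f x -> differentiable g x ->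
  'D_d (fun y => f y + g y) x = 'D_d f x + 'D_d g x.
Proof. by move=> df dg; rewrite -deriveD //; apply: diff_derivable. Qed.

Lemma der_mul f g x d : differentiable f x -> differentiable g x ->
  'D_d (fun y => f y * g y) x = f x * 'D_d g x + g x * 'D_d f x.
Proof. by move=> df dg; rewrite -[RHS]deriveM //; apply: diff_derivable. Qed.

Lemma der_cst (c : R) x d : 'D_d (fun _ : 'rV[R]_N => c) x = 0.
Proof. exact: (derive_cst c x d). Qed.

Lemma der_E (k : nat) f x d : differentiable f x ->
  'D_d (fun y => E k (f y)) x = (E k.+2 (f x) - k%:R * E k.+1 (f x)) * 'D_d f x.
Proof. by move=> df; rewrite derive_comp1 ?E_derive1 //; exact: E_derivable. Qed.

Lemma der_sum n (F : 'I_n -> 'rV[R]_N -> R) x d : (forall i, differentiable (F i) x) ->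
  'D_d (fun y => \sum_(i < n) F i y) x = \sum_(i < n) 'D_d (F i) x.
Proof.
move=> dF; have := @derive_sum R _ _ n F x d (fun i => @diff_derivable _ _ _ _ _ d (dF i)).
by rewrite fct_sumE.
Qed.

End Der.

Section IndLemmas.
Context {R : realType}.

Lemma ind_in (lo hi t : R) : lo <= t <= hi -> ind lo hi t = 1.
Proof. by move=> h; rewrite /ind indicE mem_set //= in_itv /= h. Qed.

Lemma ind_out (lo hi t : R) : ~~ (lo <= t <= hi) -> ind lo hi t = 0.
Proof.
move=> h; rewrite /ind indicE memNset //= in_itv /=.
by apply/negP; rewrite (negbTE h).
Qed.

Lemma prod_ind_ge0 n (lo hi : 'I_n -> R) (x : 'rV[R]_n) :
  0 <= \prod_(i < n) ind (lo i) (hi i) (x 0 i).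
Proof. by apply: prodr_ge0 => i _; exact: ind_ge0. Qed.

Lemma prod_ind_cases n (lo hi : 'I_n -> R) (x : 'rV[R]_n) :
  ((forall i, lo i <= x 0 i <= hi i) /\ \prod_(i < n) ind (lo i) (hi i) (x 0 i) = 1) \/
  \prod_(i < n) ind (lo i) (hi i) (x 0 i) = 0.
Proof.
have [H|H] := pselect (forall i, lo i <= x 0 i <= hi i).
  left; split => //; apply: big1 => i _; exact: ind_in.
right; move/existsNP: H => [i /negP Hi].
by rewrite (bigD1 i) //= ind_out // mul0r.
Qed.

End IndLemmas.

Section Bump.
Context {R : realType} {N : nat} (i0 : 'I_N) (a : R).

Definition cen (i : 'I_N) : R := (i == i0)%:R * (1 + 2 / a).
Definition lin (i : 'I_N) (y : 'rV[R]_N) : R := y 0 i + - cen i.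
Definition q (y : 'rV[R]_N) : R := \sum_(i < N) lin i y * lin i y.
Definition sf (y : 'rV[R]_N) : R := 1 + - (a ^+ 2) * q y.
Definition phi (y : 'rV[R]_N) : R := E 0 (sf y).

Lemma Cf_lin i : Cf (lin i).
Proof. exact: Cf_add (Cf_coord i) (Cf_cst _). Qed.

Lemma Cf_q : Cf q.
Proof. by apply: Cf_sum => i; apply: Cf_mul; exact: Cf_lin. Qed.

Lemma Cf_sf : Cf sf.
Proof. by apply: Cf_add; [exact: Cf_cst| apply: Cf_mul; [exact: Cf_cst| exact: Cf_q]]. Qed.

Lemma Cf_phi : Cf phi.
Proof. exact: Cf_E Cf_sf. Qed.

Hint Resolve Cf_lin Cf_q Cf_sf Cf_phi Cf_cst Cf_coord : core.

Lemma der_phi x d : 'D_d phi x = E 2 (sf x) * (- a ^+ 2 * \sum_(i < N) 2 * lin i x * d 0 i).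
Proof.
rewrite /phi der_E; last by apply: Cf_diff; exact: Cf_sf.
rewrite mul0r subr0; congr (_ * _).
rewrite /sf der_add; try (apply: Cf_diff; repeat constructor; auto).
rewrite der_cst add0r der_mul; try (apply: Cf_diff; repeat constructor; auto).
rewrite der_cst mulr0 addr0; congr (_ * _).
rewrite /q der_sum; last by move=> i; apply: Cf_diff; apply: Cf_mul; exact: Cf_lin.
apply: eq_bigr => i _.
rewrite der_mul; try (apply: Cf_diff; exact: Cf_lin).
rewrite /lin der_add; try (apply: Cf_diff; repeat constructor; auto).
rewrite der_cst addr0 derive_coord.
ring.
Qed.


Lemma grad_phi x i : (grad phi x) 0 i = E 2 (sf x) * (- a ^+ 2 * (2 * lin i x)).
Proof.
rewrite /grad mxE der_phi; congr (_ * (_ * _)).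
rewrite (bigD1 i) //= big1 ?addr0; first by rewrite /delta_mx !mxE !eqxx /= mulr1.
by move=> j ji; rewrite /delta_mx !mxE eqxx (negbTE ji) /= mulr0.

Qed.

Lemma q_ge0 x : 0 <= q x.
Proof. by apply: sumr_ge0 => i _; by rewrite -expr2 sqr_ge0. Qed.

Lemma lin_le_q x i : lin i x * lin i x <= q x.
Proof.
rewrite /q (bigD1 i) //= lerDl.
by apply: sumr_ge0 => j _; by rewrite -expr2 sqr_ge0.
Qed.

Lemma sqnorm_grad x : sqnorm (grad phi x) = (E 2 (sf x) * a ^+ 2 * 2) ^+ 2 * q x.
Proof.
rewrite /sqnorm /q mulr_sumr; apply: eq_bigr => i _.
rewrite grad_phi; ring.
Qed.

Lemma phi_nz x : phi x != 0 -> 0 < sf x.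
Proof. by rewrite /phi; case: ltP => // h; rewrite E_le0 // eqxx. Qed.

Lemma E0_le1 (t : R) : E 0 t <= 1.
Proof.
rewrite /E; case: ifPn => // t0; rewrite expr0 mulr1 expR_le1 oppr_le0.
by rewrite invr_ge0 ltW.
Qed.

Lemma phi_ge0 x : 0 <= phi x.
Proof. exact: E_ge0. Qed.

Lemma phi_le1 x : phi x <= 1.
Proof. exact: E0_le1. Qed.


Lemma sqnorm_expand x : sqnorm x = q x + 2 * (1 + 2 / a) * lin i0 x + (1 + 2 / a) ^+ 2.
Proof.
rewrite /sqnorm /q.
rewrite (eq_bigr (fun i => lin i x * lin i x + (2 * lin i x * cen i + cen i ^+ 2))); last first.
  by move=> i _; rewrite /lin; ring.
rewrite big_split /= -addrA; congr (_ + _).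
rewrite (bigD1 i0) //= big1 ?addr0; first by rewrite /cen eqxx mul1r; ring.
by move=> j ji; rewrite /cen (negbTE ji) mul0r mulr0 expr0n /= addr0.
Qed.

Lemma enorm_bounds x : 0 < a -> a ^+ 2 * q x <= 1 ->
  1 + 1 / a <= enorm x /\ enorm x <= 1 + 3 / a.
Proof.
move=> a0 hq.
set b := 1 / a.
have b0 : 0 < b by rewrite /b divr_gt0.
have hq' : q x <= b ^+ 2.
  rewrite /b expr_div_n expr1n ler_pdivlMr ?exprn_gt0 //.
  by rewrite mulrC.
have hl := lin_le_q x i0.
have q0 := q_ge0 x.
set l := lin i0 x in hl *.
have lb : l <= b by nra.
have lb' : - b <= l by nra.
have e2 : 2 / a = 2 * b by rewrite /b mulrA mulr1.
have ex := sqnorm_expand x; rewrite e2 -/l in ex.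
split.
- rewrite /enorm -[1 + 1 / a]ger0_norm; last by rewrite addr_ge0 // ltW.
  rewrite -sqrtr_sqr; apply: ler_wsqrtr; rewrite ex -/b.
  have : 0 <= (l + b) * (l + 2 + 3 * b) by apply: mulr_ge0; lra.
  nra.
- rewrite /enorm -[1 + 3 / a]ger0_norm; last by rewrite addr_ge0 // divr_ge0 // ltW.
  rewrite -sqrtr_sqr; apply: ler_wsqrtr; rewrite ex.
  have -> : 3 / a = 3 * b by rewrite /b mulrA mulr1.
  have : 0 <= (1 + 2 * b) * (b - l) by apply: mulr_ge0; lra.
  nra.
Qed.


Lemma lin_bound x i : 0 < a -> a ^+ 2 * q x <= 1 -> `|lin i x| <= 1 / a.
Proof.
move=> a0 hq.
have hl := lin_le_q x i.
set b := 1 / a.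
have b0 : 0 < b by rewrite /b divr_gt0.
have hq' : q x <= b ^+ 2.
  rewrite /b expr_div_n expr1n ler_pdivlMr ?exprn_gt0 //.
  by rewrite mulrC.
rewrite ler_norml; apply/andP; split; nra.
Qed.

Definition Kset : set 'rV[R]_N := [set x | a ^+ 2 * q x <= 1].

Lemma closed_Kset : closed Kset.
Proof.
have : continuous (fun x : 'rV[R]_N => a ^+ 2 * q x).
  move=> x; apply: differentiable_continuous; apply: Cf_diff.
  by apply: Cf_mul; [exact: Cf_cst | exact: Cf_q].
move/continuous_closedP => /(_ [set t | t <= 1]) H.
exact (H ltac:(apply: closed_le)).
Qed.

Lemma supp_Kset : closure [set x | phi x != 0] `<=` Kset.
Proof.
rewrite [X in _ `<=` X](closure_id _).1; last exact: closed_Kset.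
apply: closureS => x /phi_nz; rewrite /sf => h.
rewrite /Kset /=; lra.
Qed.

Lemma Kset_annulus : 6 <= a -> Kset `<=` @annulus R N.
Proof.
move=> ha x hx; have a0 : 0 < a by lra.
have [h1 h2] := enorm_bounds x a0 hx.
rewrite /annulus /=; apply/andP; split.
  apply: lt_le_trans h1; rewrite ltrDl divr_gt0 //.
have : 3 / a <= 1 / 2 by rewrite ler_pdivrMr // mulrC mulrA; lra.
lra.
Qed.

Lemma test_phi : 6 <= a -> test_fun (@annulus R N) phi.
Proof.
move=> ha; have a0 : 0 < a by lra.
split; first exact: Cf_smooth Cf_phi.
split; last exact: subset_trans supp_Kset (Kset_annulus ha).
have Hc : compact [set v : 'rV[R]_N | forall i,
    (`[cen i - 1 / a, cen i + 1 / a]%classic : set R) (v ord0 i)].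
  exact: (rV_compact (A := fun i => `[cen i - 1 / a, cen i + 1 / a]%classic) (fun i => @segment_compact R _ _)).
apply: (subclosed_compact _ Hc).
  exact: closed_closure.
move=> x /supp_Kset hx i /=.
have := lin_bound x i a0 hx; rewrite /lin in_itv /= => h.
rewrite -ler_distl.
by [].
Qed.


Definition Bind (x : 'rV[R]_N) := \prod_(i < N) ind (cen i - 1 / a) (cen i + 1 / a) (x 0 i).
Definition rr : R := 1 / (2 * a * N%:R).
Definition Sind (x : 'rV[R]_N) := \prod_(i < N) ind (cen i - rr) (cen i + rr) (x 0 i).

Lemma Bind_one (x : 'rV[R]_N) : 0 < a -> a ^+ 2 * q x <= 1 -> Bind x = 1.
Proof.
move=> a0 hq; apply: big1 => i _; apply: ind_in.
have := lin_bound x i a0 hq; rewrite /lin ler_norml => /andP[h1 h2].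
apply/andP; split; lra.
Qed.

Lemma Sind_q (x : 'rV[R]_N) : 0 < a -> (0 < N)%N -> (forall i, cen i - rr <= x 0 i <= cen i + rr) ->
  a ^+ 2 * q x <= 1 / 4.
Proof.
move=> a0 N0 hx.
have N1 : 1 <= N%:R :> R by rewrite ler1n.
have rr0 : 0 < rr by rewrite /rr divr_gt0 // !mulr_gt0 //; lra.
have hq : q x <= rr ^+ 2 *+ N.
  rewrite /q -[N in _ *+ N]card_ord -sumr_const; apply: ler_sum => i _.
  have := hx i; rewrite -/(lin i x) => /andP[h1 h2].
  have : - rr <= lin i x <= rr by rewrite /lin; apply/andP; split; lra.
  move=> /andP[h3 h4]; nra.
have e : a ^+ 2 * (rr ^+ 2 *+ N) = 1 / (4 * N%:R).
  rewrite /rr -mulr_natr; field; apply/andP; split; lra.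
apply: le_trans (_ : a ^+ 2 * (rr ^+ 2 *+ N) <= 1 / 4).
  by apply: ler_wpM2l => //; rewrite sqr_ge0.
rewrite e ler_pdivrMr ?mulr_gt0 //; last lra.
rewrite mulrAC ler_pdivlMr //; lra.
Qed.

Lemma phi_lo (x : 'rV[R]_N) : 0 < a -> a ^+ 2 * q x <= 1 / 4 -> expR (- (4 / 3)) <= phi x.
Proof.
move=> a0 hq.
have s0 : 3 / 4 <= sf x by rewrite /sf; lra.
rewrite /phi E_gt0 ?expr0 ?mulr1; last lra.
rewrite ler_expR lerN2 -div1r ler_pdivrMr; lra.
Qed.

Lemma Psi_lo (x : 'rV[R]_N) : 6 <= a -> a ^+ 2 * q x <= 1 -> expR (-6) <= Psi a x.
Proof.
move=> ha hq; have a0 : 0 < a by lra.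
have [_ h2] := enorm_bounds x a0 hq.
set b := 1 / a.
have b0 : 0 < b by rewrite divr_gt0.
have b6 : b <= 1 / 6 by rewrite /b ler_pdivrMr // mulrC mulrA; lra.
have e3 : 3 / a = 3 * b by rewrite /b mulrA mulr1.
rewrite e3 in h2.
have hn : 1 - 3 * b <= `|enorm x - 2|.
  by rewrite ler_normr; apply/orP; right; lra.
have he : expR (- (6 * b)) <= 1 - 3 * b.
  rewrite expRN -div1r ler_pdivrMr ?expR_gt0 //.
  have := expR_ge1Dx (6 * b) => h.
  have : 0 <= (1 - 3 * b) * (expR (6 * b) - (1 + 6 * b)) by apply: mulr_ge0; lra.
  nra.
have -> : expR (-6) = expR (- (6 * b)) `^ a.
  by rewrite -expRM /b; congr expR; field; rewrite gt_eqF.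
rewrite /Psi; apply: ge0_ler_powR; first exact: ltW.
- by rewrite nnegrE expR_ge0.
- by rewrite nnegrE normr_ge0.
exact: le_trans he hn.
Qed.


Lemma sf_pos_K (x : 'rV[R]_N) : 0 < sf x -> a ^+ 2 * q x <= 1.
Proof. by rewrite /sf => h; lra. Qed.

Definition Kc : R := 4 * (4`!%:R) ^+ 2.

Lemma num_pt (x : 'rV[R]_N) : 0 < a -> sqnorm (grad phi x) <= Kc * a ^+ 2 * Bind x.
Proof.
move=> a0; rewrite sqnorm_grad.
have c0 : 0 < 4`!%:R :> R by rewrite ltr0n fact_gt0.
have [s0|s0] := leP (sf x) 0.
  rewrite (E_le0 2 (sf x) s0) !mul0r expr0n /= mul0r.
  apply: mulr_ge0; last exact: prod_ind_ge0.
  by rewrite /Kc !mulr_ge0 // ?sqr_ge0 // ltW.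
rewrite Bind_one //; last exact: sf_pos_K.
have hK := sf_pos_K x s0.
have q0 := q_ge0 x.
have e0 := E_ge0 2 (sf x).
have s1 : sf x <= 1 by rewrite /sf; have := mulr_ge0 (sqr_ge0 a) q0; lra.
set c := 4`!%:R in c0 *.
have eb : E 2 (sf x) <= c.
  apply: le_trans (E_bound 2 (sf x)) _.
  have : sf x ^+ 2 <= 1 by rewrite expr_le1 //; lra.
  rewrite -/c; nra.
set e := E 2 (sf x) in e0 eb *.
have -> : (e * a ^+ 2 * 2) ^+ 2 * q x = 4 * (e ^+ 2) * (a ^+ 2) * (a ^+ 2 * q x) by ring.
rewrite /Kc; apply: ler_pM.
- by apply: mulr_ge0; [apply: mulr_ge0 => //; exact: sqr_ge0 | exact: sqr_ge0].
- by apply: mulr_ge0 => //; exact: sqr_ge0.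
- apply: ler_wpM2r; first exact: sqr_ge0.
  apply: ler_wpM2l => //; rewrite ler_sqr ?nnegrE ?(ltW c0) //.
- exact: hK.
Qed.


Lemma Psi_ge0 (x : 'rV[R]_N) : 0 <= Psi a x.
Proof. exact: powR_ge0. Qed.

Lemma den_pt_up (x : 'rV[R]_N) (p : R) : 6 <= a -> 0 < p ->
  Psi a x * `|phi x| `^ p <= 1 * Bind x.
Proof.
move=> ha p0; have a0 : 0 < a by lra.
have [ph|ph] := eqVneq (phi x) 0.
  rewrite ph normr0 powR0 ?gt_eqF // mulr0 mul1r; exact: prod_ind_ge0.
have s0 := phi_nz x ph.
have hK := sf_pos_K x s0.
rewrite Bind_one // mul1r.
have [h1 h2] := enorm_bounds x a0 hK.
have b3 : 3 / a <= 1 / 2 by rewrite ler_pdivrMr // mulrC mulrA; lra.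
have b1 : 0 < 1 / a by rewrite divr_gt0.
have n1 : `|enorm x - 2| <= 1 by rewrite ler_norml; apply/andP; split; lra.
rewrite -[1 in leRHS](mulr1 1); apply: ler_pM.
- exact: Psi_ge0.
- exact: powR_ge0.
- rewrite /Psi; apply: (@le_trans _ _ (1 `^ a)); last by rewrite powR1.
  by apply: ge0_ler_powR => //; rewrite ?nnegrE ?normr_ge0 ?ler01 // ltW.
- apply: (@le_trans _ _ (1 `^ p)); last by rewrite powR1.
  apply: ge0_ler_powR; [exact: ltW | by rewrite nnegrE normr_ge0 | by rewrite nnegrE ler01 |].
  by rewrite ger0_norm ?phi_ge0 // phi_le1.
Qed.

Lemma den_pt_lo (x : 'rV[R]_N) (p : R) : 6 <= a -> (0 < N)%N -> 0 < p ->
  expR (-6) * expR (- (4 / 3)) `^ p * Sind x <= Psi a x * `|phi x| `^ p.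
Proof.
move=> ha N0 p0; have a0 : 0 < a by lra.
rewrite /Sind; have [[hin ->]|->] := prod_ind_cases N (fun i => cen i - rr) (fun i => cen i + rr) x.
  rewrite mulr1.
  have hq := Sind_q x a0 N0 hin.
  have hK : a ^+ 2 * q x <= 1 by lra.
  apply: ler_pM.
  - exact: expR_ge0.
  - exact: powR_ge0.
  - exact: Psi_lo.
  - apply: ge0_ler_powR; [exact: ltW | by rewrite nnegrE expR_ge0 | by rewrite nnegrE normr_ge0 |].
    by rewrite ger0_norm ?phi_ge0 // phi_lo.
rewrite mulr0; apply: mulr_ge0; [exact: Psi_ge0 | exact: powR_ge0].
Qed.

Lemma nz_pt (x : 'rV[R]_N) : 6 <= a -> (0 < N)%N ->
  expR (- (4 / 3)) ^+ 2 * Sind x <= phi x ^+ 2 + sqnorm (grad phi x).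
Proof.
move=> ha N0; have a0 : 0 < a by lra.
have sg : 0 <= sqnorm (grad phi x) by apply: sumr_ge0 => i _; exact: sqr_ge0.
rewrite /Sind; have [[hin ->]|->] := prod_ind_cases N (fun i => cen i - rr) (fun i => cen i + rr) x.
  rewrite mulr1.
  have hq := Sind_q x a0 N0 hin.
  have h := phi_lo x a0 hq.
  have e0 := expR_ge0 (- (4 / 3)) : 0 <= expR (- (4 / 3)) :> R.
  rewrite ler_wpDr //; rewrite ler_sqr ?nnegrE //; exact: phi_ge0.
by rewrite mulr0 addr_ge0 // sqr_ge0.
Qed.

End Bump.

Section Main.
Context {R : realType} {N : nat} (i0 : 'I_N).

Lemma prod_cst (c : R) : \prod_(i < N) c = c ^+ N.
Proof. by rewrite prodr_const card_ord. Qed.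

Lemma num_le (a : R) : 6 <= a ->
  (iint (fun x => (sqnorm (grad (phi i0 a) x))%:E) <= (Kc * a ^+ 2 * (2 / a) ^+ N)%:E)%E.
Proof.
move=> ha; have a0 : 0 < a by lra.
have k0 : 0 <= Kc * a ^+ 2 :> R.
  by rewrite mulr_ge0 ?sqr_ge0 // /Kc mulr_ge0 ?sqr_ge0.
apply: (@le_trans _ _ (iint (fun x => (Kc * a ^+ 2 * Bind i0 a x)%:E))).
  apply: iint_le => x; rewrite lee_fin.
    by apply: sumr_ge0 => i _; exact: sqr_ge0.
  exact: num_pt.
rewrite /Bind (iint_box N (Kc * a ^+ 2) (fun i => cen i0 a i - 1 / a) (fun i => cen i0 a i + 1 / a)) //.
  rewrite (eq_bigr (fun _ => 2 / a)) ?prod_cst //.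
  by move=> i _; rewrite mulrC; lra.
move=> i; have : 0 < 1 / a by rewrite divr_gt0.
lra.
Qed.


Lemma den_le (a p : R) : 6 <= a -> 0 < p ->
  (iint (fun x => (Psi a x * `|phi i0 a x| `^ p)%:E) <= (1 * (2 / a) ^+ N)%:E)%E.
Proof.
move=> ha p0; have a0 : 0 < a by lra.
apply: (@le_trans _ _ (iint (fun x => (1 * Bind i0 a x)%:E))).
  apply: iint_le => x; rewrite lee_fin.
    by apply: mulr_ge0; [exact: Psi_ge0 | exact: powR_ge0].
  exact: den_pt_up.
rewrite /Bind (iint_box N 1 (fun i => cen i0 a i - 1 / a) (fun i => cen i0 a i + 1 / a)) //.
  rewrite (eq_bigr (fun _ => 2 / a)) ?prod_cst //.
  by move=> i _; rewrite mulrC; lra.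
move=> i; have : 0 < 1 / a by rewrite divr_gt0.
lra.
Qed.

Local Notation rrN a := (@rr R N a).

Lemma Sbox (k a : R) : 0 <= k -> 0 < a -> (0 < N)%N ->
  iint (fun x => (k * Sind i0 a x)%:E) = (k * (2 * rrN a) ^+ N)%:E.
Proof.
move=> k0 a0 N0.
have rr0 : 0 < rrN a by rewrite /rr divr_gt0 // !mulr_gt0 // ?ltr0n //; lra.
rewrite /Sind (iint_box N k (fun i => cen i0 a i - rrN a) (fun i => cen i0 a i + rrN a)) //.
  by rewrite (eq_bigr (fun _ => 2 * rrN a)) ?prod_cst // => i _; lra.
by move=> i; lra.
Qed.

Lemma den_ge (a p : R) : 6 <= a -> (0 < N)%N -> 0 < p ->
  ((expR (-6) * expR (- (4 / 3)) `^ p * (2 * rrN a) ^+ N)%:E <=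
    iint (fun x => (Psi a x * `|phi i0 a x| `^ p)%:E))%E.
Proof.
move=> ha N0 p0; have a0 : 0 < a by lra.
have c0 : 0 <= expR (-6) * expR (- (4 / 3)) `^ p :> R.
  by rewrite mulr_ge0 ?expR_ge0 ?powR_ge0.
rewrite -Sbox //.
apply: iint_le => x; rewrite lee_fin.
  by apply: mulr_ge0 => //; exact: prod_ind_ge0.
exact: den_pt_lo.
Qed.

Lemma nz_ge (a : R) : 6 <= a -> (0 < N)%N ->
  ((expR (- (4 / 3)) ^+ 2 * (2 * rrN a) ^+ N)%:E <=
    iint (fun x => (phi i0 a x ^+ 2 + sqnorm (grad (phi i0 a) x))%:E))%E.
Proof.
move=> ha N0; have a0 : 0 < a by lra.
rewrite -Sbox ?sqr_ge0 //.
apply: iint_le => x; rewrite lee_fin.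
  by apply: mulr_ge0; [exact: sqr_ge0 | exact: prod_ind_ge0].
exact: nz_pt.
Qed.


Definition ccst (p : R) : R := expR (-6) * expR (- (4 / 3)) `^ p.

Lemma Ray_le (a p : R) : 6 <= a -> (0 < N)%N -> 0 < p ->
  (Rayleigh a p (phi i0 a) (grad (phi i0 a)) <=
   (Kc * a ^+ 2 * (2 / a) ^+ N * ((ccst p * (2 * rrN a) ^+ N) `^ (2 / p))^-1)%:E)%E.
Proof.
move=> ha N0 p0; have a0 : 0 < a by lra.
have rr0 : 0 < rrN a by rewrite /rr divr_gt0 // !mulr_gt0 // ?ltr0n //; lra.
set L := ccst p * (2 * rrN a) ^+ N.
have L0 : 0 < L by rewrite /L /ccst !mulr_gt0 ?expR_gt0 ?powR_gt0 ?exprn_gt0 // mulr_gt0.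
have hlo := den_ge a p ha N0 p0; rewrite -/(ccst p) -/L in hlo.
have hup := den_le a p ha p0.
rewrite /Rayleigh.
set den := iint _ in hlo hup *.
set num := iint _.
have dfin : den \is a fin_num.
  rewrite fin_numE; apply/andP; split.
    by apply/negP => /eqP e; rewrite e in hlo.
  by apply/negP => /eqP e; rewrite e in hup.
rewrite -(fineK dfin) in hlo hup *.
set D := fine den in hlo hup *.
rewrite lee_fin in hlo.
have D0 : 0 < D by apply: lt_le_trans L0 hlo.
have r0 : 0 < 2 / p by rewrite divr_gt0.
rewrite poweR_EFin inver gt_eqF ?powR_gt0 //.
rewrite EFinM; apply: lee_pmul.
- by apply: iint_ge0 => x; rewrite lee_fin; apply: sumr_ge0 => i _; exact: sqr_ge0.
- by rewrite lee_fin invr_ge0 powR_ge0.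
- exact: num_le.
rewrite lee_fin lef_pV2 ?posrE ?powR_gt0 //.
apply: ge0_ler_powR; [exact: ltW | by rewrite nnegrE ltW | by rewrite nnegrE ltW | exact: hlo].
Qed.


Definition Cst (p : R) : R :=
  Kc * 2 ^+ N * (ccst p `^ (2 / p))^-1 * N%:R `^ (N%:R * (2 / p)).

Lemma powR_Vbase (x y : R) : 0 <= x -> x^-1 `^ y = (x `^ y)^-1.
Proof. by move=> x0; rewrite -powR_inv1 // -powRrM mulN1r powRN. Qed.

Lemma final_eq (a p : R) : (0 < N)%N -> 0 < a -> 0 < p ->
  Kc * a ^+ 2 * (2 / a) ^+ N * ((ccst p * (2 * rrN a) ^+ N) `^ (2 / p))^-1 =
  Cst p * a `^ (2 - N%:R + 2 * N%:R / p).
Proof.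
move=> N0 a0 p0.
have Nr0 : 0 < N%:R :> R by rewrite ltr0n.
have c0 : 0 < ccst p by rewrite /ccst mulr_gt0 ?expR_gt0 ?powR_gt0.
have e1 : 2 * rrN a = (a * N%:R)^-1.
  by rewrite /rr; field; apply/andP; split; rewrite gt_eqF.
have aN0 : 0 < a * N%:R by rewrite mulr_gt0.
rewrite e1 powRM ?(ltW c0) ?exprn_ge0 ?invr_ge0 ?(ltW aN0) //.
rewrite -(powR_mulrn _ (ltW (_ : 0 < (a * N%:R)^-1))); last by rewrite invr_gt0.
rewrite -powRrM powR_Vbase ?(ltW aN0) // powRM ?(ltW a0) ?(ltW Nr0) //.
have ex : 2 - N%:R + 2 * N%:R / p = 2%:R + (- N%:R + N%:R * (2 / p)) by rewrite /=; ring.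
rewrite ex (@powRD _ a 2%:R); last by apply/implyP => _; rewrite gt_eqF.
rewrite (@powRD _ a (- N%:R)); last by apply/implyP => _; rewrite gt_eqF.
rewrite powR_mulrn ?(ltW a0) // powRN powR_mulrn ?(ltW a0) //.
rewrite expr_div_n /Cst.
have h1 : a `^ (N%:R * (2 / p)) != 0 by rewrite gt_eqF // powR_gt0.
have h2 : N%:R `^ (N%:R * (2 / p)) != 0 :> R by rewrite gt_eqF // powR_gt0.
have h3 : ccst p `^ (2 / p) != 0 by rewrite gt_eqF // powR_gt0.
have h4 : a ^+ N != 0 by rewrite expf_neq0 // gt_eqF.
field.
by rewrite h1 h2 h3 h4.
Qed.


Lemma H10_phi (a : R) : 6 <= a -> H10 (@annulus R N) (phi i0 a) (grad (phi i0 a)).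
Proof.
move=> ha.
split; first by apply: Cf_borel; exact: Cf_phi.
split.
  move=> i.
  have -> : (fun x => grad (phi i0 a) x 0 i) = (fun x => 'D_(delta_mx 0 i) (phi i0 a) x).
    by apply: funext => x; rewrite /grad mxE.
  by apply: Cf_borel; apply: Cf_der; exact: Cf_phi.
exists (fun _ => phi i0 a); split; first by move=> _; exact: test_phi.
split.
  have -> : (fun n : nat => iint (fun x => ((phi i0 a x - phi i0 a x) ^+ 2)%:E)) = (fun _ => 0%E).
    by apply: funext => n; apply: iint0 => x; rewrite subrr expr0n.
  exact: cvg_cst.
have -> : (fun n : nat => iint (fun x => (sqnorm (grad (phi i0 a) x - grad (phi i0 a) x))%:E)) = (fun _ => 0%E).
  apply: funext => n; apply: iint0 => x; rewrite subrr /sqnorm big1 // => i _.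
  by rewrite mxE expr0n.
exact: cvg_cst.
Qed.

Lemma S_le (a p : R) : 6 <= a -> (0 < N)%N -> 0 < p ->
  (S_ap N a p <= (Cst p * a `^ (2 - N%:R + 2 * N%:R / p))%:E)%E.
Proof.
move=> ha N0 p0; have a0 : 0 < a by lra.
rewrite -final_eq //.
apply: le_trans (Ray_le a p ha N0 p0).
apply: ereal_inf_lbound; exists (phi i0 a), (grad (phi i0 a)); split => //.
  exact: H10_phi.
apply/negP => /eqP e.
have := nz_ge a ha N0; rewrite e lee_fin => h.
have rr0 : 0 < rrN a by rewrite /rr divr_gt0 // !mulr_gt0 // ?ltr0n //; lra.
have : 0 < expR (- (4 / 3)) ^+ 2 * (2 * rrN a) ^+ N :> R.
  by rewrite mulr_gt0 ?exprn_gt0 ?expR_gt0 // mulr_gt0.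
lra.
Qed.

Lemma Cst_gt0 (p : R) : (0 < N)%N -> 0 < Cst p.
Proof.
move=> N0; have c0 : 0 < ccst p by rewrite /ccst mulr_gt0 ?expR_gt0 ?powR_gt0.
have k0 : 0 < Kc :> R by rewrite /Kc mulr_gt0 // exprn_gt0 // ltr0n fact_gt0.
rewrite /Cst !mulr_gt0 ?exprn_gt0 ?invr_gt0 ?powR_gt0 ?ltr0n //.
Qed.

End Main.

Theorem lemma2p3 (R : realType) (N : nat) (p : R) :
  (3 <= N)%N ->
  2 < p -> p < 2 * N%:R / (N%:R - 2) ->
  exists abar : R, 0 < abar /\
  exists C : R, 0 < C /\
  forall alpha : R, abar <= alpha ->
    (S_ap N alpha p <= (C * alpha `^ (2 - N%:R + 2 * N%:R / p))%:E)%E.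
Proof.
move=> hN p2 _.
have N0 : (0 < N)%N by apply: leq_trans hN.
pose i0 : 'I_N := Ordinal N0.
exists 6; split; first by [].
exists (@Cst R N p); split; first exact: Cst_gt0.
move=> alpha ha.
apply: (@S_le R N i0) => //; lra.
Qed.
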